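(* Assume A or B, let $e\in E_H$, and let $\lambda>0$ satisfy $\mathbb{P}(\omega_e\ge\lambda)>0$. If $A\subset\Omega_H$ is $e$-increasing with $\mathbb{P}(A)>0$, then $\mathbb{P}(A\cap\{\omega_e\ge\lambda\})>0$.
   Context: $V_H=\{(x_1,x_2)\in\mathbb{Z}^2:x_2\ge0\}$, $E_H$ its nearest-neighbour edges, $\Omega_H=[0,\infty)^{E_H}$; write $\omega=(\omega_e,\check\omega)$ with $\check\omega=(\omega_f)_{f\ne e}$. An event $A\subset\Omega_H$ is $e$-increasing if $(\omega_e,\check\omega)\in A$ and $r>0$ imply $(\omega_e+r,\check\omega)\in A$. A probability measure on $[0,\infty)^{E'}$ has the upward finite energy property if for each $e\in E'$ and $\lambda$ with $\mathbb{P}(\omega_e\ge\lambda)>0$, $\mathbb{P}(\omega_e\ge\lambda\mid\check\omega)>0$ almost surely. Assumption A: $\mathbb{P}$ is a product measure on $\Omega_H$ with i.i.d. continuous marginals. Assumption B: $\mathbb{P}$ is the restriction to $E_H$ of a measure $\hat{\mathbb{P}}$ on $[0,\infty)^{\mathcal{E}^2}$ with the upward finite energy property that is ergodic under $\mathbb{Z}^2$-translations, invariant under all symmetries of $\mathbb{Z}^2$, has $\int\omega_e^{2+\alpha}d\hat{\mathbb{P}}<\infty$ for some $\alpha>0$, unique passage times, and bounded limit shape. *)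

(* Defs.v *)
From HB Require Import structures.
From mathcomp Require Import all_boot all_order all_algebra.
From mathcomp Require Import all_classical all_reals all_analysis.
Set Implicit Arguments. Unset Strict Implicit. Unset Printing Implicit Defensive.
Import Order.TTheory GRing.Theory Num.Theory.
Local Open Scope classical_set_scope.
Local Open Scope ring_scope.

Definition vtx := (int * int)%type.

(* Nearest-neighbour edges of Z^2 (the set \mathcal{E}^2):
   (v, false) is the edge {v, v + (1,0)}, (v, true) is the edge {v, v + (0,1)}.
   Every nearest-neighbour edge has exactly one such representation. *)
Definition edge2 := (vtx * bool)%type.

Definition ends (e : edge2) : vtx * vtx :=
  (e.1, if e.2 then (e.1.1, e.1.2 + 1) else (e.1.1 + 1, e.1.2)).

(* E_H : edges with both endpoints in V_H = {x_2 >= 0}; for the representation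
   above this means exactly that the base vertex has x_2 >= 0. *)
Definition in_EH (e : edge2) : bool := 0 <= e.1.2.
Definition EH := {e : edge2 | in_EH e}.

Definition adj (u v : vtx) : bool := `|u.1 - v.1| + `|u.2 - v.2| == 1.

Definition edge_of (u v : vtx) : edge2 :=
  if v == (u.1 + 1, u.2) then (u, false)
  else if v == (u.1, u.2 + 1) then (u, true)
  else if u == (v.1 + 1, v.2) then (v, false)
  else (v, true).

Section Config.
Variable R : realType.

Definition rcfg (E : Type) := E -> R.
HB.instance Definition _ (E : Type) := gen_eqMixin (rcfg E).
HB.instance Definition _ (E : Type) := gen_choiceMixin (rcfg E).
HB.instance Definition _ (E : Type) := isPointed.Build (rcfg E) (fun _ => 0).

Definition coord_gen (E : Type) (S : set E) : set (set (rcfg E)) :=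
  \bigcup_(f in S) preimage_set_system [set: rcfg E] (fun w => w f) measurable.

Definition cfg (E : Type) := g_sigma_algebraType (coord_gen [set: E]).
HB.instance Definition _ (E : Type) :=
  Measurable.copy (cfg E) (g_sigma_algebraType (coord_gen [set: E])).

Definition nonneg_cfg (E : Type) : set (cfg E) := [set w | forall f, 0 <= w f].

Variable E : eqType.

Definition upd (w : cfg E) (e : E) (t : R) : cfg E :=
  fun f => if f == e then t else w f.

Definition e_increasing (e : E) (A : set (cfg E)) : Prop :=
  forall (w : cfg E) (r : R), A w -> 0 < r -> A (upd w e (w e + r)).

Definition Wge (e : E) (lam : R) : set (cfg E) := [set w | lam <= w e].

Definition check_sigma (e : E) : set (set (cfg E)) :=
  <<s coord_gen [set f | f != e] >>.

Definition cond_prob_version (P : probability (cfg E) R)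
    (G : set (set (cfg E))) (C : set (cfg E)) (g : cfg E -> R) : Prop :=
  (forall B : set R, measurable B -> G (g @^-1` B)) /\
  (forall S, G S -> P (C `&` S) = (\int[P]_(w in S) (g w)%:E)%E).

Definition upward_finite_energy (P : probability (cfg E) R) : Prop :=
  forall (e : E) (lam : R), (0 < P (Wge e lam))%E ->
    exists g : cfg E -> R,
      cond_prob_version P (check_sigma e) (Wge e lam) g /\
      {ae P, forall w, 0 < g w}.

Definition iid_continuous_product (P : probability (cfg E) R) : Prop :=
  exists mu : probability R R,
    (forall x : R, mu [set x] = 0%E) /\
    forall (F : seq E) (B : E -> set R), uniq F ->
      (forall f, measurable (B f)) ->
      P [set w | forall f, f \in F -> B f (w f)] = (\prod_(f <- F) mu (B f))%E.

End Config.
Arguments nonneg_cfg : clear implicits.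

Section FPP.
Variable R : realType.

Fixpoint ptime (w : cfg R edge2) (x : vtx) (p : seq vtx) : R :=
  match p with
  | [::] => 0
  | y :: q => w (edge_of x y) + ptime w y q
  end.

Definition is_path (x y : vtx) (p : seq vtx) : bool :=
  path adj x p && (last x p == y).

Definition T (w : cfg R edge2) (x y : vtx) : \bar R :=
  ereal_inf [set (ptime w x p)%:E | p in [set p | is_path x y p]].

Definition shift (a : vtx) (w : cfg R edge2) : cfg R edge2 :=
  fun e => w ((e.1.1 + a.1, e.1.2 + a.2), e.2).

Definition lattice_symmetry (phi : vtx -> vtx) : Prop :=
  bijective phi /\ forall u v, adj (phi u) (phi v) = adj u v.

Definition sym_act (phi : vtx -> vtx) (w : cfg R edge2) : cfg R edge2 :=
  fun e => w (edge_of (phi (ends e).1) (phi (ends e).2)).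

Definition ergodic_translations (Q : probability (cfg R edge2) R) : Prop :=
  (forall a A, measurable A -> Q (shift a @^-1` A) = Q A) /\
  (forall A, measurable A -> (forall a, shift a @^-1` A = A) ->
     Q A = 0%E \/ Q A = 1%E).

Definition symmetry_invariant (Q : probability (cfg R edge2) R) : Prop :=
  forall phi, lattice_symmetry phi ->
    forall A, measurable A -> Q (sym_act phi @^-1` A) = Q A.

Definition moment_2_alpha (Q : probability (cfg R edge2) R) : Prop :=
  exists alpha : R, 0 < alpha /\
    forall e, (\int[Q]_w ((`|w e| `^ (2 + alpha))%:E) < +oo)%E.

Definition unique_passage_times (Q : probability (cfg R edge2) R) : Prop :=
  {ae Q, forall w, forall (x y : vtx) (p q : seq vtx),
     is_path x y p -> is_path x y q -> uniq (x :: p) -> uniq (x :: q) ->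
     p != q -> ptime w x p != ptime w x q}.

(* time constant g(x) = lim_n E[T(0, n x)] / n, for x in R^2 (with n x
   rounded down to the lattice) *)
Definition origin : vtx := (0, 0).
Definition lattice_pt (n : nat) (x : R * R) : vtx :=
  (Num.floor (n%:R * x.1), Num.floor (n%:R * x.2)).

Definition time_const (Q : probability (cfg R edge2) R) (x : R * R) : \bar R :=
  limn (fun n : nat =>
    ((n%:R)^-1)%:E * \int[Q]_w T w origin (lattice_pt n x))%E.

Definition bounded_limit_shape (Q : probability (cfg R edge2) R) : Prop :=
  exists M : R, forall x : R * R, (time_const Q x <= 1)%E ->
    `|x.1| <= M /\ `|x.2| <= M.

Definition restrH (w : cfg R edge2) : cfg R EH := fun f => w (val f).

Definition assumptionB (P : probability (cfg R EH) R) : Prop :=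
  exists Q : probability (cfg R edge2) R,
    Q (nonneg_cfg R edge2) = 1%E /\
    (forall A : set (cfg R EH), measurable A -> P A = Q (restrH @^-1` A)) /\
    upward_finite_energy Q /\
    ergodic_translations Q /\
    symmetry_invariant Q /\
    moment_2_alpha Q /\
    unique_passage_times Q /\
    bounded_limit_shape Q.

Definition assumptionA (P : probability (cfg R EH) R) : Prop :=
  iid_continuous_product P.

End FPP.

(* Main.v *)
Require Import Defs.
From HB Require Import structures.
From mathcomp Require Import all_boot all_order all_algebra.
From mathcomp Require Import all_classical all_reals all_analysis.
Import Order.TTheory GRing.Theory Num.Theory.
Local Open Scope classical_set_scope.
Local Open Scope ring_scope.

Section Aux.
Variable R : realType.

Lemma gen_meas (E1 E2 : Type) (Pd : set E1) (phi : E2 -> E1) (c : E2 -> bool)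
  (l : R) (hP : forall f, ~~ c f -> Pd (phi f)) (X : set (cfg R E2)) :
  measurable X ->
  <<s coord_gen Pd >> ((fun w : cfg R E1 => (fun f => if c f then l else w (phi f)) : cfg R E2) @^-1` X).
Proof.
set M := (fun w : cfg R E1 => _ : cfg R E2).
move=> mX.
have : <<s coord_gen (@setT E2) >> `<=` [set Y | <<s coord_gen Pd >> (M @^-1` Y)].
  apply: smallest_sub.
    split.
    - rewrite /= preimage_set0; exact: sigma_algebra0.
    - move=> Y /= hY; rewrite setTD -preimage_setC.
      by apply: sigma_algebraC.
    - by move=> F hF /=; rewrite preimage_bigcup; apply: sigma_algebra_bigcup.
  move=> Y [f _ [B mB <-]] /=.
  case cf: (c f).
  - have [Bl|nBl] := pselect (B l).
      rewrite (_ : M @^-1` _ = setT); last by apply/seteqP; split => w //= _; rewrite /M cf.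
      exact: (@measurableT _ (g_sigma_algebraType (coord_gen Pd))).
    rewrite (_ : M @^-1` _ = set0); last by apply/seteqP; split => w //=; rewrite /M cf => -[].
    exact: sigma_algebra0.
  apply: sub_sigma_algebra; exists (phi f); first by apply: hP; rewrite cf.
  exists B => //; apply/seteqP; split => w /=; rewrite /M cf //.
by apply; exact: mX.
Qed.


Section Core.
Variable E : eqType.
Local Open Scope ereal_scope.

Lemma check_meas (e : E) (S : set (cfg R E)) : check_sigma e S -> measurable S.
Proof.
apply: sub_sigma_algebra2 => Y [f _ h]; by exists f.
Qed.

Lemma upd_meas (e : E) (lam : R) (A : set (cfg R E)) : measurable A ->
  check_sigma e ((fun w => upd w e lam) @^-1` A).
Proof.
move=> mA.
exact: (@gen_meas E E [set f | f != e] id (fun f => f == e) lam (fun f h => h) A mA).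
Qed.

Lemma Wge_meas (e : E) (lam : R) : measurable (Wge e lam).
Proof.
apply: sub_sigma_algebra; exists e => //; exists `[lam, +oo[%classic => //.
by apply/seteqP; split => w /=; rewrite in_itv /= andbT => -[].
Qed.

Lemma upd_same (w : cfg R E) (e : E) a : upd (upd w e a) e (w e) = w.
Proof.
by apply: funext => f; rewrite /upd; case: eqP => // ->.
Qed.

Lemma core (P : probability (cfg R E) R) (e : E) (lam : R) (A : set (cfg R E)) :
  measurable A -> e_increasing e A -> 0 < P A ->
  (forall S, check_sigma e S -> 0 < P S -> 0 < P (Wge e lam `&` S)) ->
  0 < P (A `&` Wge e lam).
Proof.
move=> mA incA PA H.
set S := (fun w => upd w e lam) @^-1` A.
have cS : check_sigma e S by exact: upd_meas.
have mS : measurable S := check_meas e S cS.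
have mW := Wge_meas e lam.
have sub1 : A `<=` (A `&` Wge e lam) `|` S.
  move=> w Aw; have [le|lt] := leP lam (w e); first by left.
  right; rewrite /S /=.
  have := incA w (lam - w e)%R Aw; rewrite subr_gt0 => /(_ lt).
  by rewrite addrC subrK.
have sub2 : Wge e lam `&` S `<=` A `&` Wge e lam.
  move=> w [hle Sw]; split => //.
  move: hle; rewrite /Wge /= le_eqVlt => /orP[/eqP eq|lt].
    suff -> : w = upd w e lam by [].
    by apply: funext => f; rewrite /upd; case: eqP => // ->.
  have := incA _ (w e - lam)%R Sw; rewrite subr_gt0 => /(_ lt).
  by rewrite /upd eqxx addrC subrK -/(upd (upd w e lam) e (w e)) upd_same.
have mAW : measurable (A `&` Wge e lam) by exact: measurableI.
have [S0|Spos] := eqVneq (P S) 0.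
  have : P A <= P (A `&` Wge e lam) + P S.
    by apply: le_trans (measureU2 _ mAW mS); apply: le_measure; rewrite ?inE //; exact: measurableU.
  by rewrite S0 adde0 => /(lt_le_trans PA).
have PS : 0 < P S by rewrite lt0e Spos measure_ge0.
apply: (lt_le_trans (H S cS PS)); apply: le_measure => //; rewrite inE; exact: measurableI.
Qed.


Lemma ufe_pos (P : probability (cfg R E) R) (e : E) (lam : R) (g : cfg R E -> R) :
  cond_prob_version P (check_sigma e) (Wge e lam) g -> {ae P, forall w, (0 < g w)%R} ->
  forall S, check_sigma e S -> 0 < P S -> 0 < P (Wge e lam `&` S).
Proof.
move=> [gm gint] gae S cS PS.
have mg : measurable_fun setT g.
  by move=> _ Y mY; rewrite setTI; apply: (check_meas e); exact: gm.
set Sn := fun n : nat => S `&` g @^-1` `[(((n.+1)%:R)^-1 : R)%R, +oo[%classic.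
have cSn n : check_sigma e (Sn n).
  exact: (@measurableI _ (g_sigma_algebraType (coord_gen [set f : E | f != e])) _ _ cS (gm _ (measurable_itv _))).
have mSn n : measurable (Sn n) := check_meas e _ (cSn n).
have mW := Wge_meas e lam.
have [[n Pn]|] := pselect (exists n, 0 < P (Sn n)).
  have le1 : P (Wge e lam `&` Sn n) <= P (Wge e lam `&` S).
    apply: le_measure; rewrite ?inE.
    - exact: (measurableI _ _ mW (mSn n)).
    - exact: (measurableI _ _ mW (check_meas e _ cS)).
    - by move=> w [? []].
  apply: (lt_le_trans _ le1); rewrite gint //.
  apply: (@lt_le_trans _ _ (\int[P]_(w in Sn n) (cst (((n.+1)%:R)^-1 : R)%R%:E) w)).
    by rewrite integral_cst //; apply: mule_gt0 => //; rewrite lte_fin invr_gt0 ltr0n.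
  apply: ge0_le_integral => //.
  + by move=> x _; rewrite lee_fin invr_ge0.
  + apply/(measurable_realfun.measurable_EFinP _ g).
    exact: (measurable_funS measurableT (@subsetT _ _) mg).
  + by move=> x [_ /=]; rewrite in_itv /= andbT lee_fin.
move=> nex; exfalso.
have Sn0 n : P (Sn n) = 0.
  apply/eqP; rewrite eq_le measure_ge0 andbT leNgt; apply/negP => h; apply: nex; by exists n.
have : P.-negligible S.
  apply: (@negligibleS _ _ _ _ ((\bigcup_n Sn n) `|` ~` [set w | (0 < g w)%R])).
    move=> w Sw; have [gpos|] := pselect (0 < g w)%R; last by right.
    left; exists (Num.trunc ((g w)^-1)) => //; split => //=.
    rewrite in_itv /= andbT.
    have := truncnS_gt ((g w)^-1); rewrite -invf_plt ?posrE ?invr_gt0 ?ltr0n //.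
    by move/ltW.
  apply: negligibleU => //.
  by apply: negligible_bigcup => k; apply/negligibleP => //; exact: Sn0.
by move/negligibleP => /(_ (check_meas e _ cS)) S0; rewrite S0 ltxx in PS.
Qed.


Definition cyl (F : seq E) (B : E -> set R) : set (cfg R E) :=
  [set w | forall f, f \in F -> B f (w f)].

Lemma coord_meas (f : E) (B : set R) : measurable B ->
  measurable ((fun w : cfg R E => w f) @^-1` B).
Proof.
move=> mB; apply: sub_sigma_algebra; exists f => //; exists B => //.
by rewrite setTI.
Qed.

Lemma cyl_meas F B : (forall f, measurable (B f)) -> measurable (cyl F B).
Proof.
move=> mB; elim: F => [|f F IH].
  by rewrite (_ : cyl [::] B = setT) //; apply/seteqP; split => w //= _ f.
rewrite (_ : cyl (f :: F) B = ((fun w : cfg R E => w f) @^-1` B f) `&` cyl F B).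
  by apply: measurableI => //; exact: coord_meas.
apply/seteqP; split => w /=.
  by move=> h; split; [apply: h; rewrite inE eqxx | move=> g gF; apply: h; rewrite inE gF orbT].
by move=> [h1 h2] g; rewrite inE => /orP[/eqP -> //|]; exact: h2.
Qed.

Definition G0 (e : E) : set (set (cfg R E)) :=
  [set X | exists F B, [/\ uniq F, (forall f, measurable (B f)),
     (forall f, f \in F -> f != e) & X = cyl F B]].

Lemma G0I e : setI_closed (G0 e).
Proof.
move=> X1 X2 [F1 [B1 [u1 m1 n1 ->]]] [F2 [B2 [u2 m2 n2 ->]]].
exists (undup (F1 ++ F2)), (fun f => (if f \in F1 then B1 f else setT) `&` (if f \in F2 then B2 f else setT)).
split.
- exact: undup_uniq.
- by move=> f; apply: measurableI; case: ifP.
- by move=> f; rewrite mem_undup mem_cat => /orP[/n1|/n2].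
apply/seteqP; split => w /=.
  move=> [h1 h2] f _; split; case: ifP => // h; [exact: h1|exact: h2].
move=> h; split => f hf.
  by have [] := h f; rewrite ?mem_undup ?mem_cat ?hf // hf.
by have [] := h f; rewrite ?mem_undup ?mem_cat ?hf ?orbT // hf.
Qed.

Lemma check_G0 e : check_sigma e `<=` <<s G0 e >>.
Proof.
apply: sub_sigma_algebra2 => Y [f /= fe [B mB <-]].
exists [:: f], (fun _ => B); split => //.
- by move=> g; rewrite inE => /eqP ->.
apply/seteqP; split => w /=.
  by move=> [_ h] g; rewrite inE => /eqP ->.
by move=> h; split => //; apply: h; rewrite inE.
Qed.


Lemma indepA (P : probability (cfg R E) R) (mu : probability R R)
  (hprod : forall (F : seq E) (B : E -> set R), uniq F ->
      (forall f, measurable (B f)) ->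
      P [set w | forall f, f \in F -> B f (w f)] = (\prod_(f <- F) mu (B f))%E)
  (e : E) (lam : R) :
  forall S, check_sigma e S -> P (Wge e lam `&` S) = P (Wge e lam) * P S.
Proof.
set W := Wge e lam.
have mW : measurable W := Wge_meas e lam.
have finP (X : set (cfg R E)) : measurable X -> P X \is a fin_num.
  by move=> mX; exact: fin_num_measure.
have H : <<s G0 e >> `<=` [set X | measurable X /\ P (W `&` X) = P W * P X].
  apply: lambda_system_subset; [exact: G0I| | |by []].
  - apply/dynkin_lambda_system; split.
    + by split => //; rewrite setIT probability_setT mule1.
    + move=> X [mX hX]; split; first exact: measurableC.
      have eq : P W = P (W `\` X) + P W * P X by rewrite -hX; exact: measureDI.
      rewrite -setDE probability_setC //.
      rewrite muleBr ?finP //.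
      by rewrite mule1 {1}eq addeK // fin_numM ?finP.
    + move=> F tF hF; split.
        by apply: bigcup_measurable => k _; exact: (hF k).1.
      rewrite setI_bigcupr !measure_bigcup //; first last.
      * by apply: trivIset_setIl.
      * by move=> k _; apply: measurableI => //; exact: (hF k).1.
      * by move=> k _; exact: (hF k).1.
      rewrite (eq_eseriesr (g := fun k => P W * P (F k))); last by move=> k _; exact: (hF k).2.
      rewrite -[P W]fineK ?finP // nneseriesZl //.
  - move=> X [F [B [uF mB nF ->]]]; split; first exact: cyl_meas.
    set B' := fun f => if f == e then `[lam, +oo[%classic else B f.
    have mB' f : measurable (B' f) by rewrite /B'; case: ifP.
    have eW : W = cyl [:: e] B'.
      apply/seteqP; split => w /=.
        by move=> h f; rewrite inE => /eqP ->; rewrite /B' eqxx /= in_itv /= andbT.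
      by move=> h; have := h e; rewrite inE eqxx /B' eqxx /= in_itv /= andbT; apply.
    have eWX : W `&` cyl F B = cyl (e :: F) B'.
      apply/seteqP; split => w /=.
        move=> [h1 h2] f; rewrite inE => /orP[/eqP ->|fF].
          by rewrite /B' eqxx /= in_itv /= andbT.
        by rewrite /B' (negbTE (nF f fF)); exact: h2.
      move=> h; split.
        by have := h e; rewrite inE eqxx /B' eqxx /= in_itv /= andbT; apply.
      by move=> f fF; have := h f; rewrite inE fF orbT /B' (negbTE (nF f fF)); apply.
    have ue : uniq (e :: F).
      by rewrite /= uF andbT; apply/negP => /nF; rewrite eqxx.
    rewrite eWX eW /cyl (hprod _ _ ue) // (hprod [:: e]) // (hprod F) //.
    rewrite big_cons big_seq1; congr (_ * _).
    by apply: eq_big_seq => f fF; rewrite /B' (negbTE (nF f fF)).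
by move=> S /check_G0 /H [].
Qed.

End Core.
End Aux.

Theorem lemma4p6 (R : realType) (P : probability (cfg R EH) R)
  (hOmega : P (nonneg_cfg R EH) = 1%E)
  (hAB : assumptionA P \/ assumptionB P)
  (e : EH) (lam : R) (hlam : 0 < lam) (hPlam : (0 < P (Wge e lam))%E)
  (A : set (cfg R EH)) (mA : measurable A) (AOmega : A `<=` nonneg_cfg R EH)
  (incA : e_increasing e A) (PA : (0 < P A)%E) :
  (0 < P (A `&` Wge e lam))%E.
Proof.
case: hAB => [[mu [_ hprod]]|[Q [hQ1 [hPQ [ufe _]]]]].
  apply: (@core R EH P e lam A mA incA PA) => S cS PS.
  rewrite (@indepA R EH P mu hprod e lam S cS).
  by apply: mule_gt0.
have mWe := @Wge_meas R EH e lam.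
have QW : (0 < Q (Wge (val e) lam))%E.
  by have := hPQ _ mWe; rewrite /= => <-.
have [g [gc gae]] := ufe (val e) lam QW.
have mA' : measurable (@restrH R @^-1` A).
  exact: (@gen_meas R edge2 EH setT val (fun _ => false) lam (fun _ _ => I) A mA).
have incA' : e_increasing (val e) (@restrH R @^-1` A).
  move=> w r Aw r0; have := incA (@restrH R w) r Aw r0.
  congr A; apply: funext => f; rewrite /restrH /upd val_eqE.
have PA' : (0 < Q (@restrH R @^-1` A))%E by rewrite -hPQ.
have := @core R edge2 Q (val e) lam _ mA' incA' PA' (@ufe_pos R edge2 Q (val e) lam g gc gae).
by rewrite hPQ //; apply: measurableI.
Qed.
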